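(* Let $q\in\mathbb{C}$ with $0<|q|<1$ and $m,n\in\mathbb{N}$. Then \[ \frac{1}{(q)_\infty}\sum_{k=0}^\infty\frac{q^{k^2}}{(q)_k (q)_{n-k}(q)_{m-k}} =\frac{1}{(q)_m(q)_n} \sum_{k=0}^{\infty}\frac{q^{k^2}(q)_{m+n+k}}{(q)_k (q)_{m+k}(q)_{n+k}}, \] and \[ \frac{1}{(q)_\infty}\sum_{k=0}^\infty\frac{q^{k^2+k}}{(q)_k (q)_{n-k}(q)_{m-k}} =\frac{1}{(q)_m(q)_n} \sum_{k=0}^{\infty}\frac{q^{k^2+k}(q)_{m+n+k+1}}{(q)_k (q)_{m+k+1}(q)_{n+k+1}}. \]
   Context: $(q)_n=(1-q)(1-q^2)\cdots(1-q^n)$ for $n\ge0$ (with $(q)_0=1$), $1/(q)_n=0$ for $n<0$, and $(q)_\infty=\prod_{i\ge1}(1-q^i)$. *)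

(* Defs.v *)
From Stdlib Require Import Reals.
From Coquelicot Require Import Coquelicot.

Open Scope C_scope.

Fixpoint Cpown (x : C) (n : nat) : C :=
  match n with
  | O => 1
  | S n' => x * Cpown x n'
  end.

Fixpoint qpoch (q : C) (n : nat) : C :=
  match n with
  | O => 1
  | S n' => qpoch q n' * (1 - Cpown q (S n'))
  end.

(* 1/(q)_(n-k) for integer n-k, with the convention 1/(q)_j = 0 for j < 0 *)
Definition qpoch_inv_diff (q : C) (n k : nat) : C :=
  if Nat.leb k n then / qpoch q (n - k) else 0.

Definition is_qpoch_inf (q : C) (P : C) : Prop :=
  filterlim (fun N => qpoch q N) eventually (locally P).

(* Main.v *)
Require Import Defs.
From Stdlib Require Import Reals Lra Lia Psatz ClassicalEpsilon.
From Coquelicot Require Import Coquelicot.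
Open Scope C_scope.

Lemma Cpown_add q a b : Cpown q (a + b) = Cpown q a * Cpown q b.
Proof. induction a; simpl. ring. rewrite IHa. ring. Qed.

Lemma Cmod_Cpown q n : Cmod (Cpown q n) = (Cmod q ^ n)%R.
Proof. induction n; simpl. apply Cmod_1. rewrite Cmod_mult, IHn. reflexivity. Qed.

Lemma qpoch_S q n : qpoch q (S n) = qpoch q n * (1 - Cpown q (S n)).
Proof. reflexivity. Qed.

Lemma qpoch_succ_eq q a b : a = S b -> qpoch q a = qpoch q b * (1 - Cpown q a).
Proof. intros ->. reflexivity. Qed.

Lemma pow_lt1 (r : R) i : (0 <= r < 1)%R -> (0 < i)%nat -> (r ^ i < 1)%R.
Proof. intros. apply pow_lt_1_compat; auto. Qed.

Lemma one_minus_pow_neq0 q (hq : (0 < Cmod q < 1)%R) i :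
  (0 < i)%nat -> 1 - Cpown q i <> 0.
Proof.
  intros Hi H.
  assert (E : Cpown q i = 1).
  { replace (Cpown q i) with (1 - (1 - Cpown q i)) by ring. rewrite H. ring. }
  assert (Cmod (Cpown q i) = 1%R) by (rewrite E; apply Cmod_1).
  rewrite Cmod_Cpown in H0.
  assert (Cmod q ^ i < 1)%R by (apply pow_lt1; [split; [apply Cmod_ge_0|lra] | auto]).
  lra.
Qed.

Lemma qpoch_neq0 q (hq : (0 < Cmod q < 1)%R) n : qpoch q n <> 0.
Proof.
  induction n.
  - simpl. intro H. injection H. lra.
  - rewrite qpoch_S. apply Cmult_neq_0; auto.
    apply (one_minus_pow_neq0 q hq (S n)); lia.
Qed.

Lemma Cpown_neq0 q (hq : (0 < Cmod q < 1)%R) n : Cpown q n <> 0.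
Proof.
  intro H. assert (Cmod (Cpown q n) = 0%R) by (rewrite H; apply Cmod_0).
  rewrite Cmod_Cpown in H0. apply pow_nonzero in H0; auto. lra.
Qed.

Lemma Cmod_1_minus_ge z : (1 - Cmod z <= Cmod (1 - z))%R.
Proof.
  assert (H := Cmod_triangle (1 - z) z).
  replace (1 - z + z) with (1 : C) in H by ring. rewrite Cmod_1 in H. lra.
Qed.

Lemma Cmod_1_minus_le z : (Cmod (1 - z) <= 1 + Cmod z)%R.
Proof.
  assert (H := Cmod_triangle 1 (- z)).
  replace (1 + - z) with (1 - z) in H by ring. rewrite Cmod_1, Cmod_opp in H. lra.
Qed.

Lemma exp_le_mono x y : (x <= y)%R -> (exp x <= exp y)%R.
Proof. intros H. destruct (Rle_lt_or_eq_dec _ _ H). left; apply exp_increasing; auto. subst; lra. Qed.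

Lemma exp_lower_key (r x : R) : (0 <= x <= r)%R -> (r < 1)%R ->
  (exp (- (x / (1 - r))) <= 1 - x)%R.
Proof.
  intros Hx Hr. set (y := (x / (1 - r))%R).
  assert (Hy0 : (0 <= y)%R) by (unfold y; apply Rdiv_le_0_compat; lra).
  assert (Hxy : (x * (1 + y) <= y)%R).
  { unfold y. apply Rmult_le_reg_r with (1 - r)%R. lra.
    field_simplify; try lra. nra. }
  assert (He := exp_ineq1_le y).
  assert (Hp : (exp (- y) * exp y = 1)%R) by (rewrite <- exp_plus; replace (-y + y)%R with 0%R by ring; apply exp_0).
  assert (0 < exp (- y))%R by apply exp_pos.
  nra.
Qed.

Lemma pow_le1 (r : R) k : (0 <= r <= 1)%R -> (r ^ k <= 1)%R.
Proof. intros H. induction k; simpl. lra. assert (0 <= r ^ k)%R by (apply pow_le; lra). nra. Qed.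

Definition c0 (r : R) : R := exp (- (r / (1 - r) ^ 2)).
Definition Bq (r : R) : R := exp (r / (1 - r)).

Lemma c0_pos r : (0 < c0 r)%R. Proof. apply exp_pos. Qed.
Lemma Bq_ge1 r : (0 <= r)%R -> (r < 1)%R -> (1 <= Bq r)%R.
Proof. intros. unfold Bq. assert (H1 := exp_ineq1_le (r / (1 - r))).
  assert (0 <= r / (1 - r))%R by (apply Rdiv_le_0_compat; lra). lra. Qed.

Lemma qpoch_lower_aux q (hq : (0 < Cmod q < 1)%R) k :
  (exp (- (Cmod q * (1 - Cmod q ^ k) / (1 - Cmod q) ^ 2)) <= Cmod (qpoch q k))%R.
Proof.
  set (r := Cmod q). assert (Hr : (0 < r < 1)%R) by exact hq.
  induction k.
  - rewrite pow_O. replace (r * (1 - 1) / (1 - r) ^ 2)%R with 0%R by (field; lra).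
    rewrite Ropp_0, exp_0. assert (Cmod (qpoch q 0) = 1%R) by apply Cmod_1. lra.
  - rewrite qpoch_S, Cmod_mult.
    assert (H1 := Cmod_1_minus_ge (Cpown q (S k))). rewrite Cmod_Cpown in H1. fold r in H1.
    assert (Hrk : (0 <= r ^ S k <= r)%R).
    { split. apply pow_le; lra. simpl. assert (r ^ k <= 1)%R by (apply pow_le1; lra).
      assert (0 <= r ^ k)%R by (apply pow_le; lra). nra. }
    assert (H2 := exp_lower_key r (r ^ S k) Hrk (proj2 Hr)).
    replace (- (r * (1 - r ^ S k) / (1 - r) ^ 2))%R with
      ((- (r * (1 - r ^ k) / (1 - r) ^ 2)) + (- (r ^ S k / (1 - r))))%R
      by (simpl; field; lra).
    rewrite exp_plus.
    apply Rmult_le_compat; try (left; apply exp_pos); auto. lra.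
Qed.

Lemma qpoch_lower q (hq : (0 < Cmod q < 1)%R) k : (c0 (Cmod q) <= Cmod (qpoch q k))%R.
Proof.
  eapply Rle_trans; [|apply qpoch_lower_aux; auto]. unfold c0. apply exp_le_mono.
  apply Ropp_le_contravar. set (r := Cmod q).
  assert (Hr : (0 < r < 1)%R) by exact hq.
  assert (0 <= r ^ k)%R by (apply pow_le; lra).
  unfold Rdiv. apply Rmult_le_compat_r. apply Rlt_le, Rinv_0_lt_compat. apply pow_lt. lra. nra.
Qed.

Lemma qpoch_upper_aux q (hq : (0 < Cmod q < 1)%R) k :
  (Cmod (qpoch q k) <= exp (Cmod q * (1 - Cmod q ^ k) / (1 - Cmod q)))%R.
Proof.
  set (r := Cmod q). assert (Hr : (0 < r < 1)%R) by exact hq.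
  induction k.
  - rewrite pow_O. replace (r * (1 - 1) / (1 - r))%R with 0%R by (field; lra).
    rewrite exp_0. assert (Cmod (qpoch q 0) = 1%R) by apply Cmod_1. lra.
  - rewrite qpoch_S, Cmod_mult.
    assert (H1 := Cmod_1_minus_le (Cpown q (S k))). rewrite Cmod_Cpown in H1. fold r in H1.
    assert (H2 := exp_ineq1_le (r ^ S k)).
    replace (r * (1 - r ^ S k) / (1 - r))%R with
      ((r * (1 - r ^ k) / (1 - r)) + r ^ S k)%R by (simpl; field; lra).
    rewrite exp_plus.
    apply Rmult_le_compat; try apply Cmod_ge_0; auto. lra.
Qed.

Lemma qpoch_upper q (hq : (0 < Cmod q < 1)%R) k : (Cmod (qpoch q k) <= Bq (Cmod q))%R.
Proof.
  eapply Rle_trans; [apply qpoch_upper_aux; auto|]. unfold Bq. apply exp_le_mono.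
  set (r := Cmod q). assert (Hr : (0 < r < 1)%R) by exact hq.
  assert (0 <= r ^ k)%R by (apply pow_le; lra).
  unfold Rdiv. apply Rmult_le_compat_r. apply Rlt_le, Rinv_0_lt_compat. lra. nra.
Qed.

Lemma inv_diff_bound q (hq : (0 < Cmod q < 1)%R) n k :
  (Cmod (qpoch_inv_diff q n k) <= / c0 (Cmod q))%R.
Proof.
  unfold qpoch_inv_diff. destruct (Nat.leb k n).
  - rewrite Cmod_inv by (apply qpoch_neq0; auto). apply Rinv_le_contravar. apply c0_pos.
    apply qpoch_lower; auto.
  - rewrite Cmod_0. apply Rlt_le, Rinv_0_lt_compat, c0_pos.
Qed.

Lemma pow_le_mono_r (r : R) a b : (0 <= r <= 1)%R -> (a <= b)%nat -> (r ^ b <= r ^ a)%R.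
Proof.
  intros Hr Hab. replace b with (a + (b - a))%nat by lia. rewrite pow_add.
  assert (0 <= r ^ a)%R by (apply pow_le; lra).
  assert (r ^ (b - a) <= 1)%R by (apply pow_le1; lra).
  assert (0 <= r ^ (b - a))%R by (apply pow_le; lra). nra.
Qed.

Lemma ex_series_geom_bound (a : nat -> C) (r K : R) :
  (0 <= r < 1)%R -> (forall k, (Cmod (a k) <= K * r ^ k)%R) -> ex_series a.
Proof.
  intros Hr H. apply (ex_series_le a (fun k => K * r ^ k)%R). intros k. apply H.
  exists (scal K (/ (1 - r)))%R.
  apply (is_series_ext (fun k => scal K (r ^ k))%R). intros; reflexivity.
  apply (@is_series_scal R_AbsRing R_NormedModule K (fun k => r ^ k)%R (/ (1 - r))%R).
  apply is_series_geom. rewrite Rabs_pos_eq; lra.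
Qed.

Definition SC (a : nat -> C) : C := epsilon (inhabits (0:C)) (fun l => is_series a l).

Lemma SC_correct a : ex_series a -> is_series a (SC a).
Proof. intros H. unfold SC. apply epsilon_spec. exact H. Qed.

Lemma is_series_uniq (a : nat -> C) l1 l2 : is_series a l1 -> is_series a l2 -> l1 = l2.
Proof. intros H1 H2. exact (filterlim_locally_unique _ _ _ H1 H2). Qed.

Lemma SC_eq a l : is_series a l -> SC a = l.
Proof. intros H. apply (is_series_uniq a). apply SC_correct. exists l; auto. auto. Qed.

Lemma is_series_Cplus (a b : nat -> C) la lb : is_series a la -> is_series b lb ->
  is_series (fun k => a k + b k) (la + lb).
Proof. intros. apply (is_series_plus a b); auto. Qed.

Lemma is_series_Cscal (c : C) (a : nat -> C) l : is_series a l ->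
  is_series (fun k => c * a k) (c * l).
Proof. intros. apply (is_series_scal c a l); auto. Qed.

Lemma is_series_val (a : nat -> C) l l' : is_series a l -> l = l' -> is_series a l'.
Proof. intros H ->; exact H. Qed.
Lemma Cplus_opp0 (l : C) : l + - 0 = l. Proof. ring. Qed.
Lemma Cminus_self (x : C) : x + -1 * x = 0. Proof. ring. Qed.
Lemma Cplus_0r (l : C) : l + 0 = l. Proof. ring. Qed.

Definition sh (a : nat -> C) (k : nat) : C := match k with O => 0 | S k' => a k' end.

Lemma is_series_sh a l : is_series a l -> is_series (sh a) l.
Proof.
  intros H. apply is_series_decr_1.
  eapply is_series_val. exact H. exact (eq_sym (Cplus_opp0 l)).
Qed.

Lemma is_series_first (a : nat -> C) : (forall k, a (S k) = 0) -> is_series a (a O).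
Proof.
  intros H. unfold is_series. eapply filterlim_ext; [|apply filterlim_const].
  intros N. induction N. rewrite sum_O. reflexivity.
  rewrite sum_Sn, <- IHN, H. exact (eq_sym (Cplus_0r (a O))).
Qed.

Lemma is_series_telescope (d : nat -> C) : ex_series d -> d O = 0 ->
  is_series (fun k => d (S k) - d k) (0 : C).
Proof.
  intros [D HD] H0.
  assert (H1 : is_series (fun k => d (S k)) D).
  { apply is_series_incr_1. eapply is_series_val. exact HD. rewrite H0. exact (eq_sym (Cplus_0r D)). }
  assert (H2 := is_series_Cplus _ _ _ _ H1 (is_series_Cscal (-1) _ _ HD)).
  eapply is_series_val.
  - eapply is_series_ext; [|exact H2]. intros k. simpl. ring.
  - exact (Cminus_self D).
Qed.

Ltac nzfac :=
  repeat split; try (apply qpoch_neq0; assumption); auto;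
  match goal with
  | |- ?X <> _ => let E := fresh "E" in intro E;
      match goal with H : ?A * ?Y <> _ |- _ =>
        apply H; replace Y with X by ring; rewrite E; ring end
  end.

Definition lam q j m n k := Cpown q (k*k + j*k) / qpoch q k * qpoch_inv_diff q n k * qpoch_inv_diff q m k.
Definition phi q j m n k := Cpown q (k*k + j*k) * qpoch q (m+n+k+j) / (qpoch q k * qpoch q (m+k+j) * qpoch q (n+k+j)).

Lemma R1_term q (hq : (0 < Cmod q < 1)%R) m n k :
  phi q 0 (S m) (S n) k = phi q 0 m (S n) k + Cpown q (S m) * (1 - Cpown q (S n)) * phi q 1 m n k.
Proof.
  unfold phi.
  replace (S m + S n + k + 0)%nat with (S (m+n+k+1)) by lia.
  replace (m + S n + k + 0)%nat with (m+n+k+1)%nat by lia.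
  replace (S m + k + 0)%nat with (S (m+k)) by lia.
  replace (m + k + 0)%nat with (m+k)%nat by lia.
  replace (S n + k + 0)%nat with (n+k+1)%nat by lia.
  replace (m + k + 1)%nat with (S (m+k)) by lia.
  replace (k*k + 0*k)%nat with (k*k)%nat by lia.
  replace (k*k + 1*k)%nat with (k*k + k)%nat by lia.
  assert (H1 := qpoch_neq0 q hq (m+n+k+1)).
  assert (H2 := qpoch_neq0 q hq (S (m+k))).
  assert (H3 := qpoch_neq0 q hq (n+k+1)).
  assert (H4 := qpoch_neq0 q hq k).
  assert (H5 := qpoch_neq0 q hq (m+k)).
  rewrite qpoch_S in H2. rewrite !qpoch_S.
  cbn [Cpown] in *. rewrite ?Cpown_add in *. cbn [Cpown] in *.
  field. 
  repeat split; auto.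
  intro E; apply H2; rewrite E; ring.
Qed.

Definition dR q m n k := Cpown q (S n) * (1 - Cpown q k) * phi q 0 m (S n) k.

Lemma R2_term q (hq : (0 < Cmod q < 1)%R) m n k :
  phi q 1 m (S n) k - Cpown q (S n) * phi q 0 m (S n) k - (1 - Cpown q (S n)) * phi q 1 m n k
  = dR q m n (S k) - dR q m n k.
Proof.
  unfold dR, phi.
  replace (m + S n + k + 1)%nat with (S (m+n+k+1)) by lia.
  replace (m + k + 1)%nat with (S (m+k)) by lia.
  replace (S n + k + 1)%nat with (S (n+k+1)) by lia.
  replace (m + S n + k + 0)%nat with (m+n+k+1)%nat by lia.
  replace (m + k + 0)%nat with (m+k)%nat by lia.
  replace (S n + k + 0)%nat with (n+k+1)%nat by lia.
  replace (S k * S k + 0 * S k)%nat with (k*k + k + k + 1)%nat by ring.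
  replace (m + S n + S k + 0)%nat with (S (m+n+k+1)) by lia.
  replace (m + S k + 0)%nat with (S (m+k)) by lia.
  replace (S n + S k + 0)%nat with (S (n+k+1)) by lia.
  replace (k*k + 0*k)%nat with (k*k)%nat by lia.
  replace (k*k + 1*k)%nat with (k*k + k)%nat by lia.
  assert (H1 := qpoch_neq0 q hq (S (m+n+k+1))).
  assert (H2 := qpoch_neq0 q hq (S (m+k))).
  assert (H3 := qpoch_neq0 q hq (S (n+k+1))).
  assert (H4 := qpoch_neq0 q hq (S k)).
  assert (H5 := qpoch_neq0 q hq (m+k)).
  assert (H6 := qpoch_neq0 q hq (m+n+k+1)).
  assert (H7 := qpoch_neq0 q hq (n+k+1)).
  assert (H8 := qpoch_neq0 q hq k).
  rewrite qpoch_S in H1, H2, H3, H4. rewrite !qpoch_S.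
  cbn [Cpown] in *. rewrite ?Cpown_add in *. cbn [Cpown] in *.
  field.
  all: nzfac.
Qed.

Lemma R0_term q (hq : (0 < Cmod q < 1)%R) j m k : phi q j m 0 k = phi q j 0 0 k.
Proof.
  unfold phi. replace (m + 0 + k + j)%nat with (m+k+j)%nat by lia.
  change (0 + 0 + k + j)%nat with (k + j)%nat. change (0 + k + j)%nat with (k + j)%nat.
  assert (H1 := qpoch_neq0 q hq (m+k+j)).
  assert (H2 := qpoch_neq0 q hq k).
  assert (H3 := qpoch_neq0 q hq (k+j)).
  field. auto.
Qed.

Lemma R0'_term q (hq : (0 < Cmod q < 1)%R) j n k : phi q j 0 n k = phi q j 0 0 k.
Proof.
  unfold phi.
  change (0 + n + k + j)%nat with (n + k + j)%nat.
  change (0 + 0 + k + j)%nat with (k + j)%nat. change (0 + k + j)%nat with (k + j)%nat.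
  assert (H1 := qpoch_neq0 q hq (n+k+j)).
  assert (H2 := qpoch_neq0 q hq k).
  assert (H3 := qpoch_neq0 q hq (k+j)).
  field. auto.
Qed.

Lemma inv_le q n k : (k <= n)%nat -> qpoch_inv_diff q n k = / qpoch q (n - k).
Proof. intros H. unfold qpoch_inv_diff. apply Nat.leb_le in H. rewrite H. reflexivity. Qed.

Lemma inv_gt q n k : (n < k)%nat -> qpoch_inv_diff q n k = 0.
Proof. intros H. unfold qpoch_inv_diff. apply Nat.leb_gt in H. rewrite H. reflexivity. Qed.

Lemma inv_SS q n k : qpoch_inv_diff q (S n) (S k) = qpoch_inv_diff q n k.
Proof. reflexivity. Qed.

Lemma lam_sym q j m n k : lam q j m n k = lam q j n m k.
Proof. unfold lam. ring. Qed.

Lemma L1_term q (hq : (0 < Cmod q < 1)%R) m n k :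
  (1 - Cpown q (S m)) * lam q 0 (S m) (S n) k - lam q 0 m (S n) k
  = Cpown q (S m) * sh (lam q 1 m n) k.
Proof.
  unfold lam, sh. destruct k as [|k].
  - rewrite !(inv_le q _ 0) by lia. rewrite !Nat.sub_0_r.
    assert (H1 := qpoch_neq0 q hq m). assert (H2 := qpoch_neq0 q hq (S n)).
    assert (H3 := qpoch_neq0 q hq (S m)). assert (H0 := qpoch_neq0 q hq n).
    cbn [Nat.mul Nat.add Cpown qpoch] in *.
    field. nzfac.
  - rewrite !inv_SS.
    assert (H4 := qpoch_neq0 q hq (S k)). assert (H5 := qpoch_neq0 q hq k).
    replace (S k * S k + 0 * S k)%nat with (k*k + k + k + 1)%nat by ring.
    replace (k * k + 1 * k)%nat with (k*k + k)%nat by ring.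
    destruct (Nat.lt_trichotomy k m) as [Hlt|[Heq|Hgt]].
    + destruct (Nat.lt_exists_pred 0 (m - k)) as [d [Hd _]]; [lia|].
      assert (Hm : m = S (k + d)) by lia. subst m.
      rewrite (inv_le q (S (k + d)) (S k)) by lia.
      rewrite (inv_le q (S (k + d)) k) by lia.
      replace (S (k + d) - S k)%nat with d by lia.
      replace (S (k + d) - k)%nat with (S d) by lia.
      assert (H6 := qpoch_neq0 q hq (S d)). assert (H7 := qpoch_neq0 q hq d).
      rewrite qpoch_S in H4, H6. rewrite !qpoch_S.
      cbn [Cpown] in *. rewrite ?Cpown_add in *. cbn [Cpown] in *.
      field. nzfac.
    + subst k. rewrite (inv_gt q m (S m)) by lia. rewrite (inv_le q m m) by lia.
      rewrite Nat.sub_diag.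
      rewrite qpoch_S in H4. rewrite !qpoch_S.
      cbn [Cpown qpoch] in *. rewrite ?Cpown_add in *. cbn [Cpown] in *.
      field. nzfac.
    + rewrite (inv_gt q m k) by lia. rewrite (inv_gt q m (S k)) by lia. ring.
Qed.

Lemma L2_term q (hq : (0 < Cmod q < 1)%R) m n k :
  lam q 1 m (S n) k - Cpown q (S n) * lam q 0 m (S n) k = lam q 1 m n k.
Proof.
  unfold lam.
  replace (k * k + 1 * k)%nat with (k*k + k)%nat by ring.
  replace (k * k + 0 * k)%nat with (k*k)%nat by ring.
  assert (H5 := qpoch_neq0 q hq k).
  destruct (Nat.le_gt_cases k n) as [Hle|Hgt].
  - destruct (Nat.le_exists_sub k n Hle) as [d [Hd _]]. subst n.
    rewrite (inv_le q (S (d + k)) k) by lia. rewrite (inv_le q (d + k) k) by lia.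
    replace (S (d + k) - k)%nat with (S d) by lia.
    replace (d + k - k)%nat with d by lia.
    assert (H6 := qpoch_neq0 q hq (S d)). assert (H7 := qpoch_neq0 q hq d).
    rewrite qpoch_S in H6. rewrite !qpoch_S.
    cbn [Cpown] in *. rewrite ?Cpown_add in *. cbn [Cpown] in *.
    field. nzfac.
  - rewrite (inv_gt q n k) by lia.
    destruct (Nat.eq_dec k (S n)) as [->|Hne].
    + rewrite (inv_le q (S n) (S n)) by lia. rewrite Nat.sub_diag.
      assert (H6 := qpoch_neq0 q hq (S n)).
      cbn [Cpown qpoch] in *. rewrite ?Cpown_add in *. cbn [Cpown] in *. field. nzfac.
    + rewrite (inv_gt q (S n) k) by lia. ring.
Qed.

Lemma lam_m0_S q j m k : lam q j m 0 (S k) = 0.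
Proof. unfold lam. rewrite (inv_gt q 0 (S k)) by lia. ring. Qed.

Lemma lam_m0_0 q (hq : (0 < Cmod q < 1)%R) j m : lam q j m 0 0 = / qpoch q m.
Proof.
  unfold lam. rewrite !(inv_le q _ 0) by lia. rewrite !Nat.sub_0_r.
  rewrite !Nat.mul_0_r. cbn [Nat.mul Nat.add Cpown qpoch]. cbv beta.
  assert (H1 := qpoch_neq0 q hq m). field. auto.
Qed.

Lemma L0_series q (hq : (0 < Cmod q < 1)%R) j m : is_series (lam q j m 0) (/ qpoch q m).
Proof.
  eapply is_series_val. apply is_series_first.
  - exact (lam_m0_S q j m).
  - exact (lam_m0_0 q hq j m).
Qed.

Ltac pw_norm := do 4 (cbn [Cpown] in *; rewrite ?Cpown_add in * ); cbv beta in *.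

Definition sD q j N k := Cpown q (k*k + j*k) * qpoch q N * qpoch_inv_diff q N k / (qpoch q k * qpoch q (k + j)).

Lemma S_term q (hq : (0 < Cmod q < 1)%R) j N k :
  sD q j (S N) k = sD q j N k + Cpown q (S (N + j)) * sh (sD q (S j) N) k.
Proof.
  unfold sD, sh. destruct k as [|k].
  - rewrite !(inv_le q _ 0) by lia. rewrite !Nat.sub_0_r, !Nat.mul_0_r.
    assert (H1 := qpoch_neq0 q hq N). assert (H2 := qpoch_neq0 q hq (S N)).
    assert (H3 := qpoch_neq0 q hq j).
    cbn [Nat.mul Nat.add Cpown] in *. cbv beta.
    field. nzfac.
  - rewrite !inv_SS.
    assert (H4 := qpoch_neq0 q hq (S k)). assert (H5 := qpoch_neq0 q hq k).
    assert (H8 := qpoch_neq0 q hq (S (k + j))). assert (H9 := qpoch_neq0 q hq (k + j)).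
    replace (S k * S k + j * S k)%nat with (k*k + j*k + k + k + 1 + j)%nat by ring.
    replace (k * k + S j * k)%nat with (k*k + j*k + k)%nat by ring.
    replace (S k + j)%nat with (S (k + j)) by lia.
    replace (k + S j)%nat with (S (k + j)) by lia.
    assert (H10 := qpoch_neq0 q hq (S N)). assert (H11 := qpoch_neq0 q hq N).
    destruct (Nat.lt_trichotomy k N) as [Hlt|[Heq|Hgt]].
    + destruct (Nat.lt_exists_pred 0 (N - k)) as [d [Hd _]]; [lia|].
      assert (Hm : N = S (k + d)) by lia. subst N.
      rewrite (inv_le q (S (k + d)) (S k)) by lia.
      rewrite (inv_le q (S (k + d)) k) by lia.
      replace (S (k + d) - S k)%nat with d by lia.
      replace (S (k + d) - k)%nat with (S d) by lia.
      assert (H6 := qpoch_neq0 q hq (S d)). assert (H7 := qpoch_neq0 q hq d).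
      rewrite qpoch_S in H4, H6, H8, H10. rewrite !qpoch_S.
      pw_norm.
      field. nzfac.
    + subst k. rewrite (inv_gt q N (S N)) by lia. rewrite (inv_le q N N) by lia.
      rewrite Nat.sub_diag.
      rewrite qpoch_S in H4, H8, H10. rewrite !qpoch_S.
      cbn [qpoch] in *. pw_norm.
      field. nzfac.
    + rewrite (inv_gt q N k) by lia. rewrite (inv_gt q N (S k)) by lia.
      cbv beta. field. nzfac.
Qed.

Lemma sD_0_S q j k : sD q j 0 (S k) = 0.
Proof. unfold sD. rewrite (inv_gt q 0 (S k)) by lia. unfold Cdiv. rewrite Cmult_0_r. ring. Qed.

Lemma sD_0_0 q (hq : (0 < Cmod q < 1)%R) j : sD q j 0 0 = / qpoch q j.
Proof.
  unfold sD. rewrite (inv_le q 0 0) by lia. rewrite !Nat.mul_0_r; cbn [Nat.mul Nat.add Nat.sub Cpown qpoch]. cbv beta.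
  assert (H1 := qpoch_neq0 q hq j). field. auto.
Qed.

Lemma Sval q (hq : (0 < Cmod q < 1)%R) N j :
  / qpoch q (N + j) + Cpown q (S (N + j)) * / qpoch q (N + S j) = / qpoch q (S N + j).
Proof.
  replace (N + S j)%nat with (S (N + j)) by lia. change (S N + j)%nat with (S (N + j)).
  assert (H1 := qpoch_neq0 q hq (N + j)). assert (H2 := qpoch_neq0 q hq (S (N + j))).
  rewrite qpoch_S in *. field. nzfac.
Qed.

Lemma S_series q (hq : (0 < Cmod q < 1)%R) N : forall j, is_series (sD q j N) (/ qpoch q (N + j)).
Proof.
  induction N; intros j.
  - eapply is_series_val. apply is_series_first.
    + exact (sD_0_S q j).
    + exact (sD_0_0 q hq j).
  - eapply is_series_val.
    + eapply is_series_ext; [|apply (is_series_Cplus _ _ _ _ (IHN j) (is_series_Cscal (Cpown q (S (N + j))) _ _ (is_series_sh _ _ (IHN (S j)))))].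
      intros k. simpl. symmetry. exact (S_term q hq j N k).
    + exact (Sval q hq N j).
Qed.

Lemma real_bound3 (x M A B C Bb c rk : R) :
  (0 <= x <= rk)%R -> (0 <= M <= Bb)%R -> (0 < c)%R -> (c <= A)%R -> (c <= B)%R -> (c <= C)%R ->
  (x * M * / (A * B * C) <= Bb / c ^ 3 * rk)%R.
Proof.
  intros Hx HM Hc HA HB HC.
  assert (Hc3 : (0 < c ^ 3)%R) by (apply pow_lt; lra).
  assert (Hle : (c ^ 3 <= A * B * C)%R).
  { assert (c * c <= A * B)%R by (apply Rmult_le_compat; lra).
    replace (c ^ 3)%R with (c * c * c)%R by ring. apply Rmult_le_compat; nra. }
  assert (Hinv : (/ (A * B * C) <= / c ^ 3)%R) by (apply Rinv_le_contravar; lra).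
  assert (0 <= / (A * B * C))%R by (apply Rlt_le, Rinv_0_lt_compat; lra).
  unfold Rdiv.
  apply Rle_trans with (rk * Bb * / c ^ 3)%R.
  - assert (x * M <= rk * Bb)%R by (apply Rmult_le_compat; lra).
    apply Rmult_le_compat; [nra|lra|lra|lra].
  - lra.
Qed.

Lemma phi_bound q (hq : (0 < Cmod q < 1)%R) j m n k :
  (Cmod (phi q j m n k) <= Bq (Cmod q) / c0 (Cmod q) ^ 3 * Cmod q ^ k)%R.
Proof.
  unfold phi, Cdiv.
  assert (Hnz : qpoch q k * qpoch q (m + k + j) * qpoch q (n + k + j) <> 0).
  { repeat apply Cmult_neq_0; apply qpoch_neq0; auto. }
  rewrite Cmod_mult, Cmod_inv by exact Hnz. rewrite !Cmod_mult, Cmod_Cpown.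
  apply real_bound3.
  - split. apply pow_le, Cmod_ge_0. apply pow_le_mono_r. split; [apply Cmod_ge_0|lra]. nia.
  - split. apply Cmod_ge_0. apply qpoch_upper; auto.
  - apply c0_pos.
  - apply qpoch_lower; auto.
  - apply qpoch_lower; auto.
  - apply qpoch_lower; auto.
Qed.

Lemma lam_bound q (hq : (0 < Cmod q < 1)%R) j m n k :
  (Cmod (lam q j m n k) <= 1 / c0 (Cmod q) ^ 3 * Cmod q ^ k)%R.
Proof.
  unfold lam, Cdiv.
  rewrite !Cmod_mult, Cmod_inv by (apply qpoch_neq0; auto). rewrite Cmod_Cpown.
  assert (H1 := inv_diff_bound q hq n k). assert (H2 := inv_diff_bound q hq m k).
  assert (H3 := qpoch_lower q hq k). assert (Hc := c0_pos (Cmod q)).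
  set (c := c0 (Cmod q)) in *.
  assert (Hp : (0 <= Cmod q ^ (k * k + j * k) <= Cmod q ^ k)%R).
  { split. apply pow_le, Cmod_ge_0. apply pow_le_mono_r. split; [apply Cmod_ge_0|lra]. nia. }
  assert (Hi : (/ Cmod (qpoch q k) <= / c)%R) by (apply Rinv_le_contravar; lra).
  assert (0 <= / Cmod (qpoch q k))%R.
  { apply Rlt_le, Rinv_0_lt_compat. lra. }
  assert (0 <= Cmod (qpoch_inv_diff q n k))%R by apply Cmod_ge_0.
  assert (0 <= Cmod (qpoch_inv_diff q m k))%R by apply Cmod_ge_0.
  assert (0 < / c)%R by (apply Rinv_0_lt_compat; lra).
  replace (1 / c ^ 3 * Cmod q ^ k)%R with (Cmod q ^ k * / c * / c * / c)%R by (field; lra).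
  apply Rmult_le_compat.
  - repeat apply Rmult_le_pos; lra.
  - lra.
  - apply Rmult_le_compat.
    + repeat apply Rmult_le_pos; lra.
    + lra.
    + apply Rmult_le_compat; lra.
    + lra.
  - lra.
Qed.

Lemma ex_series_phi q (hq : (0 < Cmod q < 1)%R) j m n : ex_series (phi q j m n).
Proof.
  apply (ex_series_geom_bound _ (Cmod q) (Bq (Cmod q) / c0 (Cmod q) ^ 3)).
  split; [apply Cmod_ge_0|lra]. intros k; apply phi_bound; auto.
Qed.

Lemma ex_series_lam q (hq : (0 < Cmod q < 1)%R) j m n : ex_series (lam q j m n).
Proof.
  apply (ex_series_geom_bound _ (Cmod q) (1 / c0 (Cmod q) ^ 3)).
  split; [apply Cmod_ge_0|lra]. intros k; apply lam_bound; auto.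
Qed.

Lemma ex_series_dR q (hq : (0 < Cmod q < 1)%R) m n : ex_series (dR q m n).
Proof.
  apply (ex_series_geom_bound _ (Cmod q) (2 * (Bq (Cmod q) / c0 (Cmod q) ^ 3))).
  split; [apply Cmod_ge_0|lra]. intros k. unfold dR.
  rewrite !Cmod_mult, Cmod_Cpown.
  assert (H1 := phi_bound q hq 0 m (S n) k).
  assert (H2 := Cmod_1_minus_le (Cpown q k)). rewrite Cmod_Cpown in H2.
  assert (H3 : (Cmod q ^ S n <= 1)%R) by (apply pow_le1; split; [apply Cmod_ge_0|lra]).
  assert (H4 : (Cmod q ^ k <= 1)%R) by (apply pow_le1; split; [apply Cmod_ge_0|lra]).
  assert (H5 : (0 <= Cmod q ^ S n)%R) by (apply pow_le, Cmod_ge_0).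
  assert (H6 := Cmod_ge_0 (1 - Cpown q k)).
  assert (H7 := Cmod_ge_0 (phi q 0 m (S n) k)).
  set (X := Cmod (phi q 0 m (S n) k)) in *.
  set (Y := (Bq (Cmod q) / c0 (Cmod q) ^ 3 * Cmod q ^ k)%R) in *.
  apply Rle_trans with (1 * 2 * Y)%R.
  - apply Rmult_le_compat; [apply Rmult_le_pos; lra | lra | apply Rmult_le_compat; lra | lra].
  - unfold Y. lra.
Qed.

Definition dlt q k : C := match k with O => RtoC 1 | S k' => qpoch q (S k') - qpoch q k' end.

Lemma Caux1 (a b : C) : a + (b - a) = b. Proof. ring. Qed.

Lemma sum_dlt q N : sum_n (dlt q) N = qpoch q N.
Proof.
  induction N.
  - rewrite sum_O. reflexivity.
  - rewrite sum_Sn, IHN. exact (Caux1 (qpoch q N) (qpoch q (S N))).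
Qed.

Lemma qpoch_limit q (hq : (0 < Cmod q < 1)%R) : exists P, is_qpoch_inf q P.
Proof.
  assert (Hex : ex_series (dlt q)).
  { apply (ex_series_geom_bound _ (Cmod q) (Bq (Cmod q))).
    split; [apply Cmod_ge_0|lra]. intros k. destruct k as [|k].
    - simpl. rewrite Cmod_1. rewrite Rmult_1_r. apply Bq_ge1; lra.
    - unfold dlt. replace (qpoch q (S k) - qpoch q k) with (- (qpoch q k * Cpown q (S k)))
        by (rewrite qpoch_S; ring).
      rewrite Cmod_opp, Cmod_mult, Cmod_Cpown.
      apply Rmult_le_compat_r. apply pow_le, Cmod_ge_0. apply qpoch_upper; auto. }
  destruct Hex as [P HP]. exists P. unfold is_qpoch_inf.
  eapply filterlim_ext; [|exact HP]. intros N. apply sum_dlt.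
Qed.

Lemma qp_diff q (hq : (0 < Cmod q < 1)%R) M d :
  (Cmod (qpoch q (M + d) - qpoch q M) <= Bq (Cmod q) * Cmod q ^ S M * (1 - Cmod q ^ d) / (1 - Cmod q))%R.
Proof.
  set (r := Cmod q). assert (Hr : (0 < r < 1)%R) by exact hq.
  induction d.
  - rewrite Nat.add_0_r. replace (qpoch q M - qpoch q M) with (RtoC 0) by ring.
    rewrite Cmod_0. rewrite pow_O. right. field. lra.
  - rewrite Nat.add_succ_r, qpoch_S.
    replace (qpoch q (M + d) * (1 - Cpown q (S (M + d))) - qpoch q M)
      with ((qpoch q (M + d) - qpoch q M) + - (qpoch q (M + d) * Cpown q (S (M + d)))) by ring.
    eapply Rle_trans; [apply Cmod_triangle|].
    rewrite Cmod_opp, Cmod_mult, Cmod_Cpown. fold r.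
    assert (H1 := qpoch_upper q hq (M + d)). fold r in H1.
    assert (H2 : (r ^ S (M + d) = r ^ S M * r ^ d)%R) by (rewrite <- pow_add; f_equal; lia).
    assert (0 <= r ^ S (M + d))%R by (apply pow_le; lra).
    apply Rle_trans with (Bq r * r ^ S M * (1 - r ^ d) / (1 - r) + Bq r * r ^ S (M + d))%R.
    + apply Rplus_le_compat. exact IHd. apply Rmult_le_compat_r; lra.
    + right. rewrite H2. simpl. field. lra.
Qed.

Lemma sum_n_Cminus (a b : nat -> C) N : sum_n (fun k => a k - b k) N = sum_n a N - sum_n b N.
Proof.
  induction N.
  - rewrite !sum_O. reflexivity.
  - rewrite !sum_Sn, IHN.
    change ((sum_n a N - sum_n b N) + (a (S N) - b (S N)) = (sum_n a N + a (S N)) - (sum_n b N + b (S N))).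
    ring.
Qed.

Lemma sum_bound (f : nat -> C) (K r : R) N : (0 <= r < 1)%R -> (0 <= K)%R ->
  (forall k, (k <= N)%nat -> (Cmod (f k) <= K * r ^ k)%R) ->
  (Cmod (sum_n f N) <= K / (1 - r))%R.
Proof.
  intros Hr HK H.
  assert (Hs : forall M, (M <= N)%nat -> (Cmod (sum_n f M) <= K * (1 - r ^ S M) / (1 - r))%R).
  { induction M; intros HM.
    - rewrite sum_O. eapply Rle_trans; [apply H; lia|]. right. simpl. field. lra.
    - rewrite sum_Sn. eapply Rle_trans; [apply Cmod_triangle|].
      eapply Rle_trans; [apply Rplus_le_compat; [apply IHM; lia | apply H; lia]|].
      right. simpl. field. lra. }
  eapply Rle_trans; [apply Hs; lia|].
  assert (0 <= r ^ S N)%R by (apply pow_le; lra).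
  unfold Rdiv. apply Rmult_le_compat_r. apply Rlt_le, Rinv_0_lt_compat; lra. nra.
Qed.

Lemma is_series_finite (a : nat -> C) N : (forall k, (N < k)%nat -> a k = 0) -> is_series a (sum_n a N).
Proof.
  intros H. unfold is_series.
  apply filterlim_ext_loc with (f := fun _ => sum_n a N); [|apply filterlim_const].
  exists N. intros M HM.
  destruct (Nat.le_exists_sub N M HM) as [p [-> _]].
  induction p.
  - reflexivity.
  - rewrite IHp by lia. change (S p + N)%nat with (S (p + N)). rewrite sum_Sn, H by lia.
    exact (eq_sym (Cplus_0r _)).
Qed.

Lemma eps_zero (x M : R) : (0 <= M)%R -> (forall e, (0 < e)%R -> (x <= e * M)%R) -> (x <= 0)%R.
Proof.
  intros HM H. destruct (Rle_lt_dec x 0) as [Hx|Hx]; auto.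
  assert (He : (0 < x / (M + 1))%R) by (apply Rdiv_lt_0_compat; lra).
  specialize (H _ He).
  assert (x * (M + 1) <= x * M)%R.
  { replace (x * M)%R with (x / (M + 1) * M * (M + 1))%R by (field; lra).
    apply Rmult_le_compat_r; lra. }
  nra.
Qed.

Lemma Cdecomp (P D u U V : C) : u * V = 1 ->
  P * D - 1 = (P - u) * D + u * (D - U) + u * (U - V).
Proof. intros H. rewrite <- H. ring. Qed.

Lemma limit_prod_one (r : R) (u U V : nat -> C) (P D : C) (Bb K : R) :
  (0 <= r < 1)%R -> (0 <= Bb)%R -> (0 <= K)%R ->
  filterlim u eventually (locally P) -> filterlim U eventually (locally D) ->
  (forall N, (Cmod (u N) <= Bb)%R) -> (forall N, u N * V N = 1) ->
  (forall N, (Cmod (U N - V N) <= K * r ^ N)%R) -> P * D = 1.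
Proof.
  intros Hr HB HK Hu HU Hbd HV Hdiff.
  assert (Hx : (Cmod (P * D - 1) <= 0)%R).
  { apply eps_zero with (M := (Cmod D + Bb + Bb * K)%R).
    - assert (0 <= Cmod D)%R by apply Cmod_ge_0. nra.
    - intros e He.
      destruct (proj1 (filterlim_locally_ball_norm _ _) Hu (mkposreal e He)) as [N1 H1].
      destruct (proj1 (filterlim_locally_ball_norm _ _) HU (mkposreal e He)) as [N2 H2].
      destruct (pow_lt_1_zero r ltac:(rewrite Rabs_pos_eq; lra) e He) as [N3 H3].
      set (N := (N1 + N2 + N3)%nat).
      specialize (H1 N ltac:(unfold N; lia)). specialize (H2 N ltac:(unfold N; lia)).
      specialize (H3 N ltac:(unfold N; lia)).
      change (Cmod (u N - P) < e)%R in H1. change (Cmod (U N - D) < e)%R in H2.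
      rewrite Rabs_pos_eq in H3 by (apply pow_le; lra).
      rewrite (Cdecomp P D (u N) (U N) (V N) (HV N)).
      eapply Rle_trans; [apply Cmod_triangle|].
      eapply Rle_trans; [apply Rplus_le_compat_r, Cmod_triangle|].
      rewrite !Cmod_mult.
      replace (P - u N) with (- (u N - P)) by ring.
      replace (D - U N) with (- (U N - D)) by ring.
      rewrite !Cmod_opp.
      assert (H4 := Hdiff N). assert (H5 := Hbd N).
      assert (0 <= Cmod D)%R by apply Cmod_ge_0.
      assert (0 <= Cmod (u N))%R by apply Cmod_ge_0.
      assert (0 <= Cmod (U N - D))%R by apply Cmod_ge_0.
      assert (0 <= Cmod (U N - V N))%R by apply Cmod_ge_0.
      assert (0 <= Cmod (u N - P))%R by apply Cmod_ge_0.
      assert (Cmod (U N - V N) <= K * e)%R by nra.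
      nra. }
  assert (Hz : Cmod (P * D - 1) = 0%R) by (assert (H0 := Cmod_ge_0 (P * D - 1)); lra).
  apply Cmod_eq_0 in Hz.
  replace (P * D) with ((P * D - 1) + 1) by ring. rewrite Hz. ring.
Qed.

Lemma durfee_term q (hq : (0 < Cmod q < 1)%R) N k : (k <= N)%nat ->
  phi q 0 0 0 k - sD q 0 N k =
  Cpown q (k * k) / (qpoch q k * qpoch q k) * (qpoch q (N - k) - qpoch q N) / qpoch q (N - k).
Proof.
  intros Hk. unfold phi, sD. rewrite (inv_le q N k Hk).
  replace (k * k + 0 * k)%nat with (k * k)%nat by lia.
  replace (0 + 0 + k + 0)%nat with k by lia. replace (0 + k + 0)%nat with k by lia.
  replace (k + 0)%nat with k by lia.
  assert (H1 := qpoch_neq0 q hq k). assert (H2 := qpoch_neq0 q hq (N - k)).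
  field. auto.
Qed.

Lemma durfee_bound q (hq : (0 < Cmod q < 1)%R) N k : (k <= N)%nat ->
  (Cmod (phi q 0 0 0 k - sD q 0 N k) <=
   (Bq (Cmod q) / (c0 (Cmod q) ^ 3 * (1 - Cmod q)) * Cmod q ^ N) * Cmod q ^ k)%R.
Proof.
  intros Hk. rewrite (durfee_term q hq N k Hk).
  set (r := Cmod q). assert (Hr : (0 < r < 1)%R) by exact hq.
  set (c := c0 r). assert (Hc : (0 < c)%R) by apply c0_pos.
  unfold Cdiv.
  rewrite !Cmod_mult.
  rewrite !Cmod_inv by (try apply Cmult_neq_0; apply qpoch_neq0; auto).
  rewrite !Cmod_mult, Cmod_Cpown. fold r.
  assert (HA := qpoch_lower q hq k). fold r c in HA.
  assert (HNk := qpoch_lower q hq (N - k)). fold r c in HNk.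
  assert (Hd := qp_diff q hq (N - k) k). fold r in Hd.
  replace (N - k + k)%nat with N in Hd by lia.
  replace (qpoch q (N - k) - qpoch q N) with (- (qpoch q N - qpoch q (N - k))) by ring.
  rewrite Cmod_opp.
  set (dq := Cmod (qpoch q N - qpoch q (N - k))) in *.
  assert (Hdq0 : (0 <= dq)%R) by apply Cmod_ge_0.
  assert (HrSk : (0 <= r ^ S (N - k))%R) by (apply pow_le; lra).
  assert (Hrk : (0 <= r ^ k)%R) by (apply pow_le; lra).
  assert (Hdq : (dq <= Bq r * r ^ S (N - k) / (1 - r))%R).
  { eapply Rle_trans; [exact Hd|]. unfold Rdiv. apply Rmult_le_compat_r.
    apply Rlt_le, Rinv_0_lt_compat; lra.
    assert (0 <= Bq r * r ^ S (N - k))%R by (apply Rmult_le_pos; [unfold Bq; left; apply exp_pos|lra]).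
    nra. }
  assert (He : (0 <= r ^ (k * k))%R) by (apply pow_le; lra).
  assert (Hpw : (r ^ (k * k) * r ^ S (N - k) <= r ^ N * r ^ k)%R).
  { rewrite <- !pow_add. apply pow_le_mono_r. lra. nia. }
  assert (HiA : (/ (Cmod (qpoch q k) * Cmod (qpoch q k)) <= / (c * c))%R).
  { apply Rinv_le_contravar. nra. apply Rmult_le_compat; lra. }
  assert (HiN : (/ Cmod (qpoch q (N - k)) <= / c)%R) by (apply Rinv_le_contravar; lra).
  assert (0 <= / (Cmod (qpoch q k) * Cmod (qpoch q k)))%R.
  { apply Rlt_le, Rinv_0_lt_compat. nra. }
  assert (0 <= / Cmod (qpoch q (N - k)))%R by (apply Rlt_le, Rinv_0_lt_compat; lra).
  assert (HB0 : (0 < Bq r)%R) by (unfold Bq; apply exp_pos).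
  apply Rle_trans with (r ^ (k * k) * / (c * c) * (Bq r * r ^ S (N - k) / (1 - r)) * / c)%R.
  - apply Rmult_le_compat.
    + repeat apply Rmult_le_pos; lra.
    + lra.
    + apply Rmult_le_compat.
      * apply Rmult_le_pos; lra.
      * lra.
      * apply Rmult_le_compat; lra.
      * lra.
    + lra.
  - replace (r ^ (k * k) * / (c * c) * (Bq r * r ^ S (N - k) / (1 - r)) * / c)%R
      with (Bq r / (c ^ 3 * (1 - r)) * (r ^ (k * k) * r ^ S (N - k)))%R by (field; lra).
    replace (Bq r / (c ^ 3 * (1 - r)) * r ^ N * r ^ k)%R
      with (Bq r / (c ^ 3 * (1 - r)) * (r ^ N * r ^ k))%R by ring.
    apply Rmult_le_compat_l; [|exact Hpw].
    apply Rlt_le. apply Rdiv_lt_0_compat. lra. apply Rmult_lt_0_compat. apply pow_lt; lra. lra.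
Qed.

Lemma sD_zero q N k : (N < k)%nat -> sD q 0 N k = 0.
Proof. intros Hk. unfold sD. rewrite (inv_gt q N k Hk). unfold Cdiv. rewrite Cmult_0_r. ring. Qed.

Lemma durfee q (hq : (0 < Cmod q < 1)%R) P : is_qpoch_inf q P -> P * SC (phi q 0 0 0) = 1.
Proof.
  intros HP.
  set (r := Cmod q). assert (Hr : (0 < r < 1)%R) by exact hq.
  assert (HD := SC_correct _ (ex_series_phi q hq 0 0 0)).
  apply (limit_prod_one r (qpoch q) (sum_n (phi q 0 0 0)) (fun N => sum_n (sD q 0 N) N) P _
           (Bq r) (Bq r / (c0 r ^ 3 * (1 - r)) / (1 - r))).
  - lra.
  - unfold Bq; left; apply exp_pos.
  - apply Rlt_le. apply Rdiv_lt_0_compat; [|lra]. apply Rdiv_lt_0_compat. apply exp_pos.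
    apply Rmult_lt_0_compat. apply pow_lt, c0_pos. lra.
  - exact HP.
  - exact HD.
  - intros N. apply qpoch_upper; auto.
  - intros N.
    assert (Hs := S_series q hq N 0).
    assert (Hf : is_series (sD q 0 N) (sum_n (sD q 0 N) N)).
    { apply is_series_finite. intros k Hk. exact (sD_zero q N k Hk). }
    rewrite (is_series_uniq _ _ _ Hf Hs). rewrite Nat.add_0_r.
    field. apply qpoch_neq0; auto.
  - intros N. rewrite <- sum_n_Cminus.
    assert (Hc3 : (c0 r <> 0)%R) by (apply Rgt_not_eq, c0_pos).
    assert (Hr1 : (1 - r <> 0)%R) by lra.
    replace (Bq r / (c0 r ^ 3 * (1 - r)) / (1 - r) * r ^ N)%R
      with ((Bq r / (c0 r ^ 3 * (1 - r)) * r ^ N) / (1 - r))%R by (field; split; auto).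
    apply sum_bound.
    + lra.
    + apply Rmult_le_pos; [|apply pow_le; lra]. apply Rlt_le. apply Rdiv_lt_0_compat. apply exp_pos.
      apply Rmult_lt_0_compat. apply pow_lt, c0_pos. lra.
    + intros k Hk. apply durfee_bound; auto.
Qed.

Ltac toC := match goal with |- ?a = ?b => change (@eq C a b) end.

Lemma SC_ext (a b : nat -> C) : ex_series a -> (forall k, a k = b k) -> SC a = SC b.
Proof.
  intros Ha H. symmetry. apply SC_eq. eapply is_series_ext; [exact H|]. apply SC_correct; auto.
Qed.

Lemma FL0 q (hq : (0 < Cmod q < 1)%R) j m : SC (lam q j m 0) = / qpoch q m.
Proof. apply SC_eq. apply L0_series; auto. Qed.

Lemma FL0' q (hq : (0 < Cmod q < 1)%R) j n : SC (lam q j 0 n) = / qpoch q n.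
Proof.
  rewrite (SC_ext _ (lam q j n 0)). apply FL0; auto. apply ex_series_lam; auto.
  intros k. apply lam_sym.
Qed.

Lemma FR0 q (hq : (0 < Cmod q < 1)%R) j m : SC (phi q j m 0) = SC (phi q j 0 0).
Proof. apply SC_ext. apply ex_series_phi; auto. intros k. apply R0_term; auto. Qed.

Lemma FR0' q (hq : (0 < Cmod q < 1)%R) j n : SC (phi q j 0 n) = SC (phi q j 0 0).
Proof. apply SC_ext. apply ex_series_phi; auto. intros k. apply R0'_term; auto. Qed.

Lemma FL1 q (hq : (0 < Cmod q < 1)%R) m n :
  (1 - Cpown q (S m)) * SC (lam q 0 (S m) (S n)) = SC (lam q 0 m (S n)) + Cpown q (S m) * SC (lam q 1 m n).
Proof.
  apply (is_series_uniq (fun k => (1 - Cpown q (S m)) * lam q 0 (S m) (S n) k)).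
  - apply is_series_Cscal. apply SC_correct, ex_series_lam; auto.
  - eapply is_series_ext; [|apply is_series_Cplus; [apply SC_correct, ex_series_lam; auto|
        apply is_series_Cscal, is_series_sh, SC_correct, ex_series_lam; auto]].
    intros k. cbv beta. rewrite <- (L1_term q hq m n k). toC; ring.
Qed.

Lemma FR1 q (hq : (0 < Cmod q < 1)%R) m n :
  SC (phi q 0 (S m) (S n)) = SC (phi q 0 m (S n)) + Cpown q (S m) * (1 - Cpown q (S n)) * SC (phi q 1 m n).
Proof.
  apply SC_eq.
  eapply is_series_ext; [|apply is_series_Cplus; [apply SC_correct, ex_series_phi; auto|
        apply is_series_Cscal, SC_correct, ex_series_phi; auto]].
  intros k. cbv beta. rewrite (R1_term q hq m n k). reflexivity.
Qed.

Lemma FL2 q (hq : (0 < Cmod q < 1)%R) m n :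
  SC (lam q 1 m (S n)) = Cpown q (S n) * SC (lam q 0 m (S n)) + SC (lam q 1 m n).
Proof.
  apply SC_eq.
  eapply is_series_ext; [|apply is_series_Cplus; [apply is_series_Cscal, SC_correct, ex_series_lam; auto|
        apply SC_correct, ex_series_lam; auto]].
  intros k. cbv beta. rewrite <- (L2_term q hq m n k). toC; ring.
Qed.

Lemma dR_0 q m n : dR q m n 0 = 0.
Proof. unfold dR. cbn [Cpown]. ring. Qed.

Lemma FR2 q (hq : (0 < Cmod q < 1)%R) m n :
  SC (phi q 1 m (S n)) = Cpown q (S n) * SC (phi q 0 m (S n)) + (1 - Cpown q (S n)) * SC (phi q 1 m n).
Proof.
  apply SC_eq.
  eapply is_series_val.
  - eapply is_series_ext; [|apply is_series_Cplus; [apply is_series_Cplus;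
        [apply (is_series_Cscal (Cpown q (S n))), SC_correct, (ex_series_phi q hq 0 m (S n))
        |apply (is_series_Cscal (1 - Cpown q (S n))), SC_correct, (ex_series_phi q hq 1 m n)]
        |apply (is_series_telescope (dR q m n)); [apply ex_series_dR; auto | apply dR_0]]].
    intros k. cbv beta. rewrite <- (R2_term q hq m n k). toC; ring.
  - exact (Cplus_0r _).
Qed.

Definition Lv q j m n := qpoch q m * qpoch q n * SC (lam q j m n).

Lemma D1_eq q (hq : (0 < Cmod q < 1)%R) : SC (phi q 1 0 0) = SC (phi q 0 0 0).
Proof.
  assert (E := FR2 q hq 0 0).
  rewrite (FR0' q hq 1 1), (FR0' q hq 0 1) in E.
  assert (Hq : Cpown q 1 <> 0) by (apply Cpown_neq0; auto).
  set (F1 := SC (phi q 1 0 0)) in *. set (F0 := SC (phi q 0 0 0)) in *.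
  assert (E2 : Cpown q 1 * (F1 - F0) = 0).
  { replace (Cpown q 1 * (F1 - F0)) with (F1 - (Cpown q 1 * F0 + (1 - Cpown q 1) * F1)) by ring.
    rewrite <- E. ring. }
  replace F1 with (F0 + / Cpown q 1 * (Cpown q 1 * (F1 - F0))) by (field; auto).
  rewrite E2. ring.
Qed.

Lemma main_claim q (hq : (0 < Cmod q < 1)%R) P : is_qpoch_inf q P ->
  forall m n, Lv q 0 m n = P * SC (phi q 0 m n) /\ Lv q 1 m n = P * SC (phi q 1 m n).
Proof.
  intros HP.
  assert (HD0 := durfee q hq P HP).
  assert (HD1 : P * SC (phi q 1 0 0) = 1) by (rewrite D1_eq; auto).
  assert (Hb : forall j m, Lv q j m 0 = 1).
  { intros j m. unfold Lv. rewrite FL0 by auto. change (qpoch q 0) with (RtoC 1).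
    field. apply qpoch_neq0; auto. }
  assert (Hb' : forall j n, Lv q j 0 n = 1).
  { intros j n. unfold Lv. rewrite FL0' by auto. change (qpoch q 0) with (RtoC 1).
    field. apply qpoch_neq0; auto. }
  induction m; intros n.
  - rewrite (Hb' O n), (Hb' 1%nat n), (FR0' q hq O n), (FR0' q hq 1%nat n). auto.
  - induction n.
    + rewrite (Hb O (S m)), (Hb 1%nat (S m)), (FR0 q hq O (S m)), (FR0 q hq 1%nat (S m)). auto.
    + destruct IHn as [IH0 IH1]. destruct (IHm (S n)) as [IHa IHb]. destruct (IHm n) as [IHc IHd].
      assert (E0 : Lv q 0 (S m) (S n) = Lv q 0 m (S n) + Cpown q (S m) * (1 - Cpown q (S n)) * Lv q 1 m n).
      { unfold Lv. rewrite !qpoch_S.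
        transitivity (qpoch q m * (qpoch q n * (1 - Cpown q (S n))) *
                      ((1 - Cpown q (S m)) * SC (lam q 0 (S m) (S n)))); [ring|].
        rewrite FL1 by auto. ring. }
      assert (R0 : Lv q 0 (S m) (S n) = P * SC (phi q 0 (S m) (S n))).
      { rewrite E0, IHa, IHd, FR1 by auto. ring. }
      split; auto.
      assert (E1 : Lv q 1 (S m) (S n) = Cpown q (S n) * Lv q 0 (S m) (S n) + (1 - Cpown q (S n)) * Lv q 1 (S m) n).
      { unfold Lv. rewrite FL2 by auto. rewrite (qpoch_S q n). ring. }
      rewrite E1, R0, IH1, FR2 by auto. ring.
Qed.

Lemma P_neq0 q (hq : (0 < Cmod q < 1)%R) P : is_qpoch_inf q P -> P <> 0.
Proof.
  intros HP E. assert (HD0 := durfee q hq P HP). rewrite E in HD0.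
  rewrite Cmult_0_l in HD0. apply RtoC_inj in HD0. lra.
Qed.

Lemma final_eq (P A B L F : C) : P <> 0 -> A <> 0 -> B <> 0 -> A * B * L = P * F ->
  / P * L = / (A * B) * F.
Proof.
  intros HP HA HB E.
  replace L with (P * F / (A * B)) by (rewrite <- E; field; auto).
  field. auto.
Qed.

Theorem mainTheorem14 (q : C) (hq : (0 < Cmod q < 1)%R) (m n : nat) :
  (exists Pinf S1 S2 : C,
     is_qpoch_inf q Pinf /\
     is_series (fun k : nat =>
        Cpown q (k * k) / qpoch q k * qpoch_inv_diff q n k * qpoch_inv_diff q m k) S1 /\
     is_series (fun k : nat =>
        Cpown q (k * k) * qpoch q (m + n + k)
          / (qpoch q k * qpoch q (m + k) * qpoch q (n + k))) S2 /\
     / Pinf * S1 = / (qpoch q m * qpoch q n) * S2)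
  /\
  (exists Pinf S1 S2 : C,
     is_qpoch_inf q Pinf /\
     is_series (fun k : nat =>
        Cpown q (k * k + k) / qpoch q k * qpoch_inv_diff q n k * qpoch_inv_diff q m k) S1 /\
     is_series (fun k : nat =>
        Cpown q (k * k + k) * qpoch q (m + n + k + 1)
          / (qpoch q k * qpoch q (m + k + 1) * qpoch q (n + k + 1))) S2 /\
     / Pinf * S1 = / (qpoch q m * qpoch q n) * S2).
Proof.
  destruct (qpoch_limit q hq) as [P HP].
  assert (HP0 := P_neq0 q hq P HP).
  destruct (main_claim q hq P HP m n) as [E0 E1].
  unfold Lv in E0, E1.
  assert (Hm := qpoch_neq0 q hq m). assert (Hn := qpoch_neq0 q hq n).
  split.
  - exists P, (SC (lam q 0 m n)), (SC (phi q 0 m n)). split; [exact HP|]. split; [|split].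
    + eapply is_series_ext; [|apply SC_correct, ex_series_lam; auto].
      intros k. unfold lam. replace (k * k + 0 * k)%nat with (k * k)%nat by lia. reflexivity.
    + eapply is_series_ext; [|apply SC_correct, ex_series_phi; auto].
      intros k. unfold phi. replace (k * k + 0 * k)%nat with (k * k)%nat by lia.
      rewrite !Nat.add_0_r. reflexivity.
    + apply final_eq; auto.
  - exists P, (SC (lam q 1 m n)), (SC (phi q 1 m n)). split; [exact HP|]. split; [|split].
    + eapply is_series_ext; [|apply SC_correct, ex_series_lam; auto].
      intros k. unfold lam. replace (k * k + 1 * k)%nat with (k * k + k)%nat by lia. reflexivity.
    + eapply is_series_ext; [|apply SC_correct, ex_series_phi; auto].
      intros k. unfold phi. replace (k * k + 1 * k)%nat with (k * k + k)%nat by lia. reflexivity.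
    + apply final_eq; auto.
Qed.
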